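(* Let $f\in\mathscr{L}^r$ be a Lorenz expanding map. Then $f$ is eventually onto: for every open interval $J\subset[-1,1]\setminus\{0\}$ there is an integer $N>0$ such that $\bigcup_{i=0}^N f^i(J)=(-1,1)$ (where $f^i(J)$ denotes the image under $f^i$ of the set of points of $J$ at which $f^i$ is defined).
   Context: For $r\ge1$, $\mathscr{L}^r$ is the set of $C^r$ maps $f:[-1,1]\setminus\{0\}\to(-1,1)$ such that $\lim_{x\to0^-}f(x)=1$, $\lim_{x\to0^-}f'(x)=+\infty$, $\lim_{x\to0^+}f(x)=-1$, $\lim_{x\to0^+}f'(x)=+\infty$, and $-1<f(x)<1$, $f'(x)>\sqrt2$ for all $x\in[-1,1]\setminus\{0\}$. Such $f$ is called a Lorenz expanding map. The iterate $f^n$ is defined at $x$ if $f^m(x)\neq0$ for all $0\le m<n$. *)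

(* Defs.v *)
From Stdlib Require Import Reals.
From Coquelicot Require Import Coquelicot.
Open Scope R_scope.

Definition Dom (x : R) : Prop := -1 <= x <= 1 /\ x <> 0.

(* g has derivative l at x (a point of D), relative to the set D
   (one-sided at endpoints of D). *)
Definition has_deriv_within (D : R -> Prop) (g : R -> R) (x l : R) : Prop :=
  filterlim (fun y => (g y - g x) / (y - x))
    (within (fun y => D y /\ y <> x) (locally x)) (locally l).

Definition continuous_within (D : R -> Prop) (g : R -> R) (x : R) : Prop :=
  filterlim g (within D (locally x)) (locally (g x)).

Definition Cr_on (r : nat) (D : R -> Prop) (g : R -> R) : Prop :=
  exists d : nat -> R -> R,
    (forall x, D x -> d O x = g x) /\
    (forall k x, (k < r)%nat -> D x -> has_deriv_within D (d k) x (d (S k) x)) /\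
    (forall k x, (k <= r)%nat -> D x -> continuous_within D (d k) x).

Definition Lorenz_expanding (r : nat) (f : R -> R) : Prop :=
  Cr_on r Dom f /\
  exists fp : R -> R,
    (forall x, Dom x -> has_deriv_within Dom f x (fp x)) /\
    filterlim f (at_left 0) (locally 1) /\
    filterlim fp (at_left 0) (Rbar_locally p_infty) /\
    filterlim f (at_right 0) (locally (-1)) /\
    filterlim fp (at_right 0) (Rbar_locally p_infty) /\
    (forall x, Dom x -> -1 < f x < 1 /\ fp x > sqrt 2).

Definition iter_image (f : R -> R) (i : nat) (J : R -> Prop) (y : R) : Prop :=
  exists x, J x /\ (forall m, (m < i)%nat -> Nat.iter m f x <> 0) /\
            y = Nat.iter i f x.

(* Main.v *)
Require Import Defs.
From Stdlib Require Import Reals Lra Lia.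
From Coquelicot Require Import Coquelicot.
Open Scope R_scope.


Definition ED (D : R -> Prop) (g : R -> R) (c L : R) : Prop :=
  forall eps, 0 < eps -> exists del, 0 < del /\
    forall y, D y -> Rabs (y - c) < del -> Rabs (g y - L) < eps.

Lemma filter_ED (D : R -> Prop) g c L :
  filterlim g (within D (locally c)) (locally L) -> ED D g c L.
Proof.
  intros H eps Heps.
  rewrite filterlim_locally in H.
  destruct (H (mkposreal eps Heps)) as [del Hd].
  exists del. split; [apply cond_pos|].
  intros y Dy Hy. apply (Hd y); [exact Hy| exact Dy].
Qed.

Lemma filter_ED_inf (D : R -> Prop) g c :
  filterlim g (within D (locally c)) (Rbar_locally p_infty) ->
  forall M, exists del, 0 < del /\ forall y, D y -> Rabs (y - c) < del -> M < g y.
Proof.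
  intros H M.
  assert (HP : Rbar_locally p_infty (fun x => M < x)) by (exists M; auto).
  destruct (H _ HP) as [del Hd].
  exists del. split; [apply cond_pos|].
  intros y Dy Hy. apply (Hd y); [exact Hy| exact Dy].
Qed.

Lemma ED_cont g c : ED (fun _ => True) g c (g c) -> continuity_pt g c.
Proof.
  intros H. apply continuity_pt_filterlim.
  apply filterlim_locally. intros eps.
  destruct (H eps (cond_pos eps)) as [del [Hd H2]].
  exists (mkposreal del Hd). intros y Hy. apply H2; auto.
Qed.


Definition clamp (a b x : R) := Rmax a (Rmin x b).

Lemma clamp_in a b x : a <= b -> a <= clamp a b x <= b.
Proof. intros. unfold clamp, Rmax, Rmin; repeat destruct Rle_dec; lra. Qed.

Lemma clamp_id a b x : a <= x <= b -> clamp a b x = x.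
Proof. intros. unfold clamp, Rmax, Rmin; repeat destruct Rle_dec; lra. Qed.

Lemma clamp_lip a b x y : a <= b -> Rabs (clamp a b y - clamp a b x) <= Rabs (y - x).
Proof.
  intros. unfold clamp, Rmax, Rmin; repeat destruct Rle_dec; unfold Rabs; repeat destruct Rcase_abs; lra.
Qed.

Lemma ED_clamp h a b c : a <= b ->
  ED (fun y => a <= y <= b) h (clamp a b c) (h (clamp a b c)) ->
  ED (fun _ => True) (fun t => h (clamp a b t)) c (h (clamp a b c)).
Proof.
  intros Hab H eps Heps. destruct (H eps Heps) as [del [Hd H2]].
  exists del; split; auto. intros y _ Hy. apply H2. apply clamp_in; auto.
  eapply Rle_lt_trans; [apply clamp_lip; auto| exact Hy].
Qed.

Section Branch.
Variables (G dG : R -> R) (a b lam : R).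
Hypothesis Hab : a < b.
Hypothesis HC : forall c, a <= c <= b -> ED (fun y => a <= y <= b) G c (G c).
Hypothesis HD : forall c, a < c < b -> derivable_pt_lim G c (dG c).
Hypothesis HL : forall c, a < c < b -> lam <= dG c.

Let Gc := fun t => G (clamp a b t).

Lemma Gc_cont : forall t, continuity_pt Gc t.
Proof.
  intros t. apply ED_cont. unfold Gc. apply ED_clamp; [lra|].
  apply HC. apply clamp_in; lra.
Qed.

Lemma Gc_der : forall c, a < c < b -> derivable_pt_lim Gc c (dG c).
Proof.
  intros c Hc eps Heps. destruct (HD c Hc eps Heps) as [del Hd].
  assert (Hm : 0 < Rmin del (Rmin (c - a) (b - c))).
  { apply Rmin_pos; [apply cond_pos| apply Rmin_pos; lra]. }
  exists (mkposreal _ Hm). intros h Hh Hh2. simpl in Hh2.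
  assert (Hh3 : Rabs h < del) by (eapply Rlt_le_trans; [exact Hh2| apply Rmin_l]).
  assert (Hh4 : Rabs h < Rmin (c - a) (b - c)) by (eapply Rlt_le_trans; [exact Hh2| apply Rmin_r]).
  pose proof (Rmin_l (c - a) (b - c)). pose proof (Rmin_r (c - a) (b - c)).
  apply Rabs_def2 in Hh4.
  unfold Gc. rewrite (clamp_id a b (c + h)) by lra. rewrite (clamp_id a b c) by lra.
  apply Hd; auto.
Qed.

Lemma branch_mono : forall x y, a <= x -> x < y -> y <= b -> lam * (y - x) <= G y - G x.
Proof.
  intros x y Hx Hxy Hy.
  destruct (MVT_gen Gc x y (fun t => Rmax lam (dG t))) as [c [Hc Heq]].
  - intros t Ht. rewrite Rmin_left in Ht by lra. rewrite Rmax_right in Ht by lra.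
    apply is_derive_Reals. rewrite Rmax_right by (apply HL; lra). apply Gc_der; lra.
  - intros t _. apply Gc_cont.
  - unfold Gc in Heq. rewrite !clamp_id in Heq by lra. rewrite Heq.
    apply Rmult_le_compat_r; [lra| apply Rmax_l].
Qed.

Lemma branch_ivt : forall x y z, a <= x -> x < y -> y <= b -> G x < z < G y ->
  exists w, x < w < y /\ G w = z.
Proof.
  intros x y z Hx Hxy Hy Hz.
  destruct (IVT_gen Gc x y z Gc_cont) as [w [Hw Heq]].
  - unfold Gc. rewrite !clamp_id by lra. rewrite Rmin_left, Rmax_right by lra. lra.
  - rewrite Rmin_left in Hw by lra. rewrite Rmax_right in Hw by lra.
    unfold Gc in Heq. rewrite clamp_id in Heq by lra.
    exists w. split; auto.
    destruct (Req_dec w x) as [->|]; [lra|].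
    destruct (Req_dec w y) as [->|]; [lra|]. lra.
Qed.
End Branch.

Lemma unif (h : R -> R) (a b m : R) : a <= b ->
  (forall c, a <= c <= b -> ED (fun y => a <= y <= b) h c (h c)) ->
  (forall c, a <= c <= b -> h c > m) ->
  exists l, l > m /\ forall c, a <= c <= b -> h c >= l.
Proof.
  intros Hab HC Hm.
  destruct (continuity_ab_min (fun t => h (clamp a b t)) a b Hab) as [mx [H1 H2]].
  - intros c Hc. apply ED_cont. apply ED_clamp; auto. apply HC, clamp_in; auto.
  - exists (h mx). rewrite clamp_id in H1 by auto. split; [apply Hm; auto|].
    intros c Hc. specialize (H1 c Hc). rewrite clamp_id in H1 by auto. lra.
Qed.


Definition GR (f : R -> R) x := if Req_dec_T x 0 then -1 else f x.
Definition GL (f : R -> R) x := if Req_dec_T x 0 then 1 else f x.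

Lemma GR0 f : GR f 0 = -1. Proof. unfold GR; destruct Req_dec_T; congruence. Qed.
Lemma GL0 f : GL f 0 = 1. Proof. unfold GL; destruct Req_dec_T; congruence. Qed.
Lemma GRf f x : x <> 0 -> GR f x = f x. Proof. unfold GR; destruct Req_dec_T; congruence. Qed.
Lemma GLf f x : x <> 0 -> GL f x = f x. Proof. unfold GL; destruct Req_dec_T; congruence. Qed.

Section Dyn.
Variables (f : R -> R) (lam : R) (J : R -> Prop).
Hypothesis Hlam0 : 0 < lam.
Hypothesis Hlam : lam * lam > 2.
Hypothesis Hrange : forall x, Dom x -> -1 < f x < 1.
Hypothesis HmR : forall x y, 0 <= x -> x < y -> y <= 1 -> lam * (y - x) <= GR f y - GR f x.
Hypothesis HiR : forall x y z, 0 <= x -> x < y -> y <= 1 -> GR f x < z < GR f y ->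
  exists w, x < w < y /\ GR f w = z.
Hypothesis HmL : forall x y, -1 <= x -> x < y -> y <= 0 -> lam * (y - x) <= GL f y - GL f x.
Hypothesis HiL : forall x y z, -1 <= x -> x < y -> y <= 0 -> GL f x < z < GL f y ->
  exists w, x < w < y /\ GL f w = z.

Definition Good n u v := forall y, u < y < v -> iter_image f n J y.

Lemma step_img n y : iter_image f n J y -> y <> 0 -> iter_image f (S n) J (f y).
Proof.
  intros [x [Jx [Hm Hy]]] Hy0. exists x. split; [exact Jx|]. split.
  - intros m Hm'. destruct (Nat.eq_dec m n) as [->|Hne]; [rewrite <- Hy; exact Hy0|].
    apply Hm. lia.
  - simpl. rewrite Hy. reflexivity.
Qed.

Lemma Good_sub n u v u' v' : Good n u v -> u <= u' -> v' <= v -> Good n u' v'.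
Proof. intros H H1 H2 y Hy. apply H. lra. Qed.

Lemma img_R n u v : 0 <= u -> u < v -> v <= 1 -> Good n u v -> Good (S n) (GR f u) (GR f v).
Proof.
  intros Hu Huv Hv H z Hz. destruct (HiR u v z Hu Huv Hv Hz) as [w [Hw Hwz]].
  assert (w <> 0) by lra. rewrite GRf in Hwz by auto. subst z.
  apply step_img; [apply H; lra| auto].
Qed.

Lemma img_L n u v : -1 <= u -> u < v -> v <= 0 -> Good n u v -> Good (S n) (GL f u) (GL f v).
Proof.
  intros Hu Huv Hv H z Hz. destruct (HiL u v z Hu Huv Hv Hz) as [w [Hw Hwz]].
  assert (w <> 0) by lra. rewrite GLf in Hwz by auto. subst z.
  apply step_img; [apply H; lra| auto].
Qed.

Lemma GR_bnd x : 0 <= x <= 1 -> -1 <= GR f x < 1.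
Proof.
  intros Hx. destruct (Req_dec x 0) as [->|Hx0]; [rewrite GR0; lra|].
  rewrite GRf by auto. assert (Dom x) by (split; lra). specialize (Hrange x H). lra.
Qed.

Lemma GL_bnd x : -1 <= x <= 0 -> -1 < GL f x <= 1.
Proof.
  intros Hx. destruct (Req_dec x 0) as [->|Hx0]; [rewrite GL0; lra|].
  rewrite GLf by auto. assert (Dom x) by (split; lra). specialize (Hrange x H). lra.
Qed.

Lemma lam1 : 1 < lam.
Proof. nra. Qed.

Lemma f1_pos : 0 < f 1.
Proof.
  pose proof (HmR 0 1 ltac:(lra) ltac:(lra) ltac:(lra)). rewrite GR0, GRf in H by lra.
  pose proof lam1. lra.
Qed.

Lemma fm1_neg : f (-1) < 0.
Proof.
  pose proof (HmL (-1) 0 ltac:(lra) ltac:(lra) ltac:(lra)). rewrite GL0, GLf in H by lra.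
  pose proof lam1. lra.
Qed.

Definition T u v := (u <= 0 /\ 1 <= v) \/ (u <= -1 /\ 0 <= v).

Lemma cover n u v : Good n u v -> T u v ->
  forall y, -1 < y < 1 -> exists i, (i <= n + 2)%nat /\ iter_image f i J y.
Proof.
  pose proof f1_pos. pose proof fm1_neg.
  intros HG [[Hu Hv]|[Hu Hv]] y Hy.
  - assert (H1 : Good (S n) (-1) (f 1)).
    { rewrite <- (GR0 f), <- (GRf f 1) by lra. apply img_R; try lra.
      eapply Good_sub; [exact HG| |]; lra. }
    assert (H2 : Good (S (S n)) (f (-1)) 1).
    { rewrite <- (GL0 f), <- (GLf f (-1)) by lra. apply img_L; try lra.
      eapply Good_sub; [exact H1| |]; lra. }
    destruct (Rlt_dec y (f 1)).
    + exists (S n). split; [lia|]. apply H1. lra.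
    + exists (S (S n)). split; [lia|]. apply H2. lra.
  - assert (H1 : Good (S n) (f (-1)) 1).
    { rewrite <- (GL0 f), <- (GLf f (-1)) by lra. apply img_L; try lra.
      eapply Good_sub; [exact HG| |]; lra. }
    assert (H2 : Good (S (S n)) (-1) (f 1)).
    { rewrite <- (GR0 f), <- (GRf f 1) by lra. apply img_R; try lra.
      eapply Good_sub; [exact H1| |]; lra. }
    destruct (Rlt_dec y (f 1)).
    + exists (S (S n)). split; [lia|]. apply H2. lra.
    + exists (S n). split; [lia|]. apply H1. lra.
Qed.

Definition s := (2 + lam * lam) / (4 * lam).
Definition rho := Rmin lam (Rmin (s * lam) (lam / (2 * s))).

Lemma s_pos : 0 < s.
Proof. unfold s. apply Rdiv_lt_0_compat; nra. Qed.

Lemma slam : s * lam = (2 + lam * lam) / 4.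
Proof. unfold s. field. lra. Qed.

Lemma lams : lam / (2 * s) = 2 * (lam * lam) / (2 + lam * lam).
Proof. unfold s. field. nra. Qed.

Lemma rho_gt1 : 1 < rho.
Proof.
  pose proof lam1. unfold rho. apply Rmin_glb_lt; [lra|]. apply Rmin_glb_lt.
  - rewrite slam. lra.
  - rewrite lams. apply Rlt_div_r; [nra|]. nra.
Qed.

Definition Phi u v := if Rlt_dec u 0 then (if Rlt_dec 0 v then s * (v - u) else v - u) else v - u.

Lemma Phi_nz u v : (v <= 0 \/ 0 <= u) -> Phi u v = v - u.
Proof. intros H. unfold Phi. destruct Rlt_dec; [destruct Rlt_dec|]; lra. Qed.

Lemma Phi_lo u v : u < v -> Rmin 1 s * (v - u) <= Phi u v.
Proof.
  intros H. pose proof (Rmin_l 1 s). pose proof (Rmin_r 1 s).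
  unfold Phi. destruct Rlt_dec; [destruct Rlt_dec|]; nra.
Qed.

Lemma Phi_hi u v : u < v -> Phi u v <= (1 + s) * (v - u).
Proof.
  intros H. pose proof s_pos. unfold Phi. destruct Rlt_dec; [destruct Rlt_dec|]; nra.
Qed.

Lemma rho_le_min : rho <= Rmin 1 s * lam.
Proof.
  unfold rho. pose proof lam1. pose proof s_pos. unfold Rmin at 3. destruct Rle_dec.
  - rewrite Rmult_1_l. apply Rmin_l.
  - eapply Rle_trans; [apply Rmin_r| apply Rmin_l].
Qed.

Lemma one_step n u v : Good n u v -> -1 <= u -> u < v -> v <= 1 ->
  (exists n' u' v', Good n' u' v' /\ T u' v') \/
  (exists u' v', Good (S n) u' v' /\ -1 <= u' /\ u' < v' /\ v' <= 1 /\ rho * Phi u v <= Phi u' v').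
Proof.
  intros HG Hu Huv Hv. pose proof rho_le_min. pose proof lam1. pose proof s_pos.
  pose proof (Rmin_l 1 s). pose proof (Rmin_r 1 s).
  destruct (Rle_dec v 0) as [Hv0|Hv0].
  -
    right. exists (GL f u), (GL f v). pose proof (HmL u v Hu Huv Hv0).
    pose proof (GL_bnd u ltac:(lra)). pose proof (GL_bnd v ltac:(lra)).
    assert (Hlt : GL f u < GL f v) by nra.
    split; [apply img_L; auto|]. split; [lra|]. split; [auto|]. split; [lra|].
    rewrite (Phi_nz u v) by lra. pose proof (Phi_lo _ _ Hlt) as HPL.
    eapply Rle_trans; [|exact HPL]. assert (0 <= Rmin 1 s) by (apply Rmin_glb; lra).
    assert (rho * (v - u) <= Rmin 1 s * lam * (v - u)) by (apply Rmult_le_compat_r; lra).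
    nra.
  - destruct (Rle_dec 0 u) as [Hu0|Hu0].
    + right. exists (GR f u), (GR f v). pose proof (HmR u v Hu0 Huv Hv).
      pose proof (GR_bnd u ltac:(lra)). pose proof (GR_bnd v ltac:(lra)).
      assert (Hlt : GR f u < GR f v) by nra.
      split; [apply img_R; auto|]. split; [lra|]. split; [auto|]. split; [lra|].
      rewrite (Phi_nz u v) by lra. pose proof (Phi_lo _ _ Hlt) as HPL.
    eapply Rle_trans; [|exact HPL]. assert (0 <= Rmin 1 s) by (apply Rmin_glb; lra).
    assert (rho * (v - u) <= Rmin 1 s * lam * (v - u)) by (apply Rmult_le_compat_r; lra).
    nra.
    +
      assert (HL0 : Good n u 0) by (eapply Good_sub; [exact HG| |]; lra).
      assert (HR0 : Good n 0 v) by (eapply Good_sub; [exact HG| |]; lra).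
      pose proof (img_L n u 0 Hu ltac:(lra) ltac:(lra) HL0) as IL. rewrite GL0 in IL.
      pose proof (img_R n 0 v ltac:(lra) ltac:(lra) Hv HR0) as IR. rewrite GR0 in IR.
      destruct (Rle_dec (GL f u) 0) as [Hg|Hg].
      { left. exists (S n), (GL f u), 1. split; auto. left; lra. }
      destruct (Rle_dec 0 (GR f v)) as [Hg'|Hg'].
      { left. exists (S n), (-1), (GR f v). split; auto. right; lra. }
      right. assert (Hrs : rho * s <= lam / 2).
      { assert (rho <= lam / (2 * s)) by (unfold rho; eapply Rle_trans; [apply Rmin_r| apply Rmin_r]).
        apply (Rmult_le_compat_r s) in H4; [|lra].
        replace (lam / (2 * s) * s) with (lam / 2) in H4 by (field; lra). exact H4. }
      assert (HP : Phi u v = s * (v - u)).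
      { unfold Phi. destruct Rlt_dec; [destruct Rlt_dec|]; lra. }
      rewrite HP.
      pose proof (HmL u 0 Hu ltac:(lra) ltac:(lra)) as ML. rewrite GL0 in ML.
      pose proof (HmR 0 v ltac:(lra) ltac:(lra) Hv) as MR. rewrite GR0 in MR.
      pose proof (GL_bnd u ltac:(lra)).
      assert (0 < lam * (0 - u)) by nra. assert (0 < lam * (v - 0)) by nra.
      assert (Hq : rho * s * (v - u) <= lam / 2 * (v - u)) by (apply Rmult_le_compat_r; lra).
      destruct (Rle_dec v (- u)).
      * exists (GL f u), 1. split; auto. split; [lra|]. split; [lra|]. split; [lra|].
        rewrite Phi_nz by lra. rewrite <- Rmult_assoc.
        assert (lam/2*(v-u) <= lam*(0-u)) by (replace (lam*(0-u)) with (lam/2*(-u - u)) by field; apply Rmult_le_compat_l; lra). lra.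
      * exists (-1), (GR f v). split; auto. split; [lra|]. split; [lra|].
        pose proof (GR_bnd v ltac:(lra)). split; [lra|].
        rewrite Phi_nz by lra. rewrite <- Rmult_assoc.
        assert (lam/2*(v-u) <= lam*(v-0)) by (replace (lam*(v-0)) with (lam/2*(v + v)) by field; apply Rmult_le_compat_l; lra). lra.
Qed.

Lemma iterate : forall k n u v, Good n u v -> -1 <= u -> u < v -> v <= 1 ->
  Phi u v * rho ^ k > 2 * (1 + s) ->
  exists n' u' v', Good n' u' v' /\ T u' v'.
Proof.
  induction k; intros n u v HG Hu Huv Hv Hk.
  - simpl in Hk. pose proof (Phi_hi u v Huv). pose proof s_pos. nra.
  - destruct (one_step n u v HG Hu Huv Hv) as [Hd|[u' [v' [HG' [H1 [H2 [H3 H4]]]]]]]; auto.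
    apply (IHk (S n) u' v'); auto.
    pose proof rho_gt1. assert (0 < rho ^ k) by (apply pow_lt; lra).
    simpl in Hk. nra.
Qed.

Lemma iter_range : forall i x, -1 < x < 1 -> (forall m, (m < i)%nat -> Nat.iter m f x <> 0) ->
  -1 < Nat.iter i f x < 1.
Proof.
  induction i; intros x Hx Hm; simpl; auto.
  apply Hrange. assert (H := IHi x Hx (fun m Hm' => Hm m ltac:(lia))).
  split; [lra|]. apply (Hm i). lia.
Qed.

Lemma dyn_main a b : a < b -> (forall x, a < x < b -> Dom x) ->
  (forall x, J x <-> a < x < b) ->
  exists N : nat, (0 < N)%nat /\
    forall y, (-1 < y < 1) <-> (exists i, (i <= N)%nat /\ iter_image f i J y).
Proof.
  intros Hab HD HJ.
  assert (Ha : -1 <= a).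
  { destruct (Rle_dec (-1) a) as [|Hn]; auto. exfalso.
    set (x := (a + Rmin b (-1)) / 2).
    assert (a < Rmin b (-1)) by (apply Rmin_glb_lt; lra).
    pose proof (Rmin_l b (-1)). pose proof (Rmin_r b (-1)).
    destruct (HD x) as [[Hx1 Hx2] _]; unfold x in *; lra. }
  assert (Hb : b <= 1).
  { destruct (Rle_dec b 1) as [|Hn]; auto. exfalso.
    set (x := (b + Rmax a 1) / 2).
    assert (Rmax a 1 < b) by (apply Rmax_lub_lt; lra).
    pose proof (Rmax_l a 1). pose proof (Rmax_r a 1).
    destruct (HD x) as [[Hx1 Hx2] _]; unfold x in *; lra. }
  assert (G0 : Good 0 a b).
  { intros y Hy. exists y. split; [apply HJ; auto|]. split; [intros; lia| reflexivity]. }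
  assert (HP : 0 < Phi a b).
  { pose proof (Phi_lo a b Hab). pose proof s_pos.
    assert (0 < Rmin 1 s) by (apply Rmin_glb_lt; lra). nra. }
  pose proof rho_gt1.
  destruct (Pow_x_infinity rho ltac:(rewrite Rabs_right; lra) (2 * (1 + s) / Phi a b + 1)) as [k Hk].
  specialize (Hk k (le_n k)). rewrite Rabs_right in Hk by (left; apply pow_lt; lra).
  assert (Hk2 : Phi a b * rho ^ k > 2 * (1 + s)).
  { apply (Rmult_ge_compat_l (Phi a b)) in Hk; [|lra].
    replace (Phi a b * (2 * (1 + s) / Phi a b + 1)) with (2 * (1 + s) + Phi a b) in Hk by (field; lra).
    lra. }
  destruct (iterate k 0 a b G0 Ha Hab Hb Hk2) as [n [u [v [HG HT]]]].
  exists (n + 2)%nat. split; [lia|]. intros y. split.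
  - intros Hy. apply (cover n u v HG HT y Hy).
  - intros [i [_ [x [Jx [Hm Hy]]]]]. subst y. apply iter_range; auto.
    apply HJ in Jx. lra.
Qed.
End Dyn.


Lemma ED_sub (D D' : R -> Prop) g c L : (forall y, D' y -> D y) -> ED D g c L -> ED D' g c L.
Proof. intros HS H eps He. destruct (H eps He) as [del [Hd H2]]. exists del; split; auto. Qed.

Lemma ED_ext (D : R -> Prop) g h c L : (forall y, D y -> g y = h y) -> ED D g c L -> ED D h c L.
Proof.
  intros HS H eps He. destruct (H eps He) as [del [Hd H2]]. exists del; split; auto.
  intros y Dy Hy. rewrite <- HS by auto. auto.
Qed.

Lemma ED_unique (D : R -> Prop) g c l1 l2 :
  (forall del, 0 < del -> exists y, D y /\ Rabs (y - c) < del) ->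
  ED D g c l1 -> ED D g c l2 -> l1 = l2.
Proof.
  intros Hden H1 H2. destruct (Req_dec l1 l2) as [|Hne]; auto. exfalso.
  assert (He : 0 < Rabs (l1 - l2) / 2) by (apply Rdiv_lt_0_compat; [apply Rabs_pos_lt; lra| lra]).
  destruct (H1 _ He) as [d1 [Hd1 H1']]. destruct (H2 _ He) as [d2 [Hd2 H2']].
  destruct (Hden (Rmin d1 d2) (Rmin_pos _ _ Hd1 Hd2)) as [y [Dy Hy]].
  pose proof (Rmin_l d1 d2). pose proof (Rmin_r d1 d2).
  specialize (H1' y Dy ltac:(lra)). specialize (H2' y Dy ltac:(lra)).
  assert (Rabs (l1 - l2) <= Rabs (g y - l1) + Rabs (g y - l2)).
  { replace (l1 - l2) with (- (g y - l1) + (g y - l2)) by ring.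
    eapply Rle_trans; [apply Rabs_triang|]. rewrite Rabs_Ropp. lra. }
  lra.
Qed.

Lemma dense_Dom x : Dom x -> forall del, 0 < del ->
  exists y, (Dom y /\ y <> x) /\ Rabs (y - x) < del.
Proof.
  intros [Hx Hx0] del Hd.
  set (t := Rmin (1/2) (del/2)).
  assert (Ht : 0 < t) by (apply Rmin_pos; lra).
  assert (Ht1 : t <= 1/2) by apply Rmin_l. assert (Ht2 : t <= del/2) by apply Rmin_r.
  exists (x * (1 - t)). split; [split; [split|]|].
  - nra.
  - intros Heq. apply Rmult_integral in Heq. lra.
  - intros Heq. assert (x * t = 0) by lra. apply Rmult_integral in H. lra.
  - replace (x * (1 - t) - x) with (- (x * t)) by ring. rewrite Rabs_Ropp, Rabs_mult.
    rewrite (Rabs_pos_eq t) by lra.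
    assert (Rabs x <= 1) by (apply Rabs_le; lra). pose proof (Rabs_pos x). nra.
Qed.

Lemma ED_deriv (D : R -> Prop) g G c l a b : a < c < b ->
  (forall y, a < y < b -> D y /\ G y = g y) ->
  ED (fun y => D y /\ y <> c) (fun y => (g y - g c) / (y - c)) c l ->
  derivable_pt_lim G c l.
Proof.
  intros Hc HG H eps He. destruct (H eps He) as [del [Hd H2]].
  assert (Hm : 0 < Rmin del (Rmin (c - a) (b - c))).
  { apply Rmin_pos; [lra| apply Rmin_pos; lra]. }
  exists (mkposreal _ Hm). intros h Hh Hh2. simpl in Hh2.
  pose proof (Rmin_l del (Rmin (c - a) (b - c))). pose proof (Rmin_r del (Rmin (c - a) (b - c))).
  pose proof (Rmin_l (c - a) (b - c)). pose proof (Rmin_r (c - a) (b - c)).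
  assert (Hh3 := Hh2). apply Rabs_def2 in Hh3.
  destruct (HG (c + h) ltac:(lra)) as [D1 E1]. destruct (HG c ltac:(lra)) as [_ E2].
  rewrite E1, E2.
  specialize (H2 (c + h)). replace (c + h - c) with h in H2 by ring.
  apply H2; [split; [auto| lra] | lra].
Qed.


Lemma analytic r f : (1 <= r)%nat -> Lorenz_expanding r f ->
  exists lam, 0 < lam /\ lam * lam > 2 /\ (forall x, Dom x -> -1 < f x < 1) /\
  (forall x y, 0 <= x -> x < y -> y <= 1 -> lam * (y - x) <= GR f y - GR f x) /\
  (forall x y z, 0 <= x -> x < y -> y <= 1 -> GR f x < z < GR f y ->
     exists w, x < w < y /\ GR f w = z) /\
  (forall x y, -1 <= x -> x < y -> y <= 0 -> lam * (y - x) <= GL f y - GL f x) /\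
  (forall x y z, -1 <= x -> x < y -> y <= 0 -> GL f x < z < GL f y ->
     exists w, x < w < y /\ GL f w = z).
Proof.
  intros Hr [[d [Hd0 [Hd1 Hd2]]] [fp [Hfp [HlL [HpL [HlR [HpR Hb]]]]]]].
  assert (Hcf : forall c, Dom c -> ED Dom f c (f c)).
  { intros c Dc. pose proof (filter_ED _ _ _ _ (Hd2 0%nat c ltac:(lia) Dc)) as H.
    rewrite Hd0 in H by auto. eapply ED_ext; [|exact H]. auto. }
  assert (Hq : forall c, Dom c ->
    ED (fun y => Dom y /\ y <> c) (fun y => (f y - f c) / (y - c)) c (fp c)).
  { intros c Dc. apply filter_ED. apply Hfp; auto. }
  assert (Hd1fp : forall c, Dom c -> d 1%nat c = fp c).
  { intros c Dc. pose proof (filter_ED _ _ _ _ (Hd1 0%nat c ltac:(lia) Dc)) as H.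
    apply (ED_unique (fun y => Dom y /\ y <> c) (fun y => (f y - f c) / (y - c)) c).
    - intros del Hdel. destruct (dense_Dom c Dc del Hdel) as [y Hy]. exists y; auto.
    - eapply ED_ext; [|exact H]. intros y [Dy _]. simpl. rewrite !Hd0; auto.
    - auto. }
  assert (Hcfp : forall c, Dom c -> ED Dom fp c (fp c)).
  { intros c Dc. pose proof (filter_ED _ _ _ _ (Hd2 1%nat c Hr Dc)) as H.
    rewrite Hd1fp in H by auto. eapply ED_ext; [|exact H]. auto. }
  pose proof (sqrt_lt_R0 2 ltac:(lra)) as Hs0. pose proof (sqrt_sqrt 2 ltac:(lra)) as Hss.
  assert (Hs2 : sqrt 2 < 2) by nra.
  destruct (filter_ED_inf (fun u => 0 < u) fp 0 HpR 2) as [delR [HdR HR]].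
  set (dR := Rmin (delR / 2) (1 / 2)).
  assert (HdR1 : 0 < dR) by (apply Rmin_pos; lra).
  assert (HdR2 : dR <= delR / 2) by apply Rmin_l. assert (HdR3 : dR <= 1/2) by apply Rmin_r.
  destruct (unif fp dR 1 (sqrt 2) ltac:(lra)) as [lR [HlR1 HlR2]].
  { intros c Hc. eapply ED_sub; [|apply Hcfp]; unfold Dom; [intros y Hy|]; split; lra. }
  { intros c Hc. apply Hb. split; lra. }
  destruct (filter_ED_inf (fun u => u < 0) fp 0 HpL 2) as [delL [HdL HL]].
  set (dL := Rmin (delL / 2) (1 / 2)).
  assert (HdL1 : 0 < dL) by (apply Rmin_pos; lra).
  assert (HdL2 : dL <= delL / 2) by apply Rmin_l. assert (HdL3 : dL <= 1/2) by apply Rmin_r.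
  destruct (unif fp (-1) (- dL) (sqrt 2) ltac:(lra)) as [lL [HlL1 HlL2]].
  { intros c Hc. eapply ED_sub; [|apply Hcfp]; unfold Dom; [intros y Hy|]; split; lra. }
  { intros c Hc. apply Hb. split; lra. }
  set (lam := Rmin (Rmin 2 lR) (Rmin 2 lL)).
  assert (Hl1 : lam <= 2) by (eapply Rle_trans; [apply Rmin_l| apply Rmin_l]).
  assert (Hl2 : lam <= lR) by (eapply Rle_trans; [apply Rmin_l| apply Rmin_r]).
  assert (Hl3 : lam <= lL) by (eapply Rle_trans; [apply Rmin_r| apply Rmin_r]).
  assert (Hl4 : sqrt 2 < lam) by (repeat apply Rmin_glb_lt; lra).
  assert (HfpR : forall c, 0 < c < 1 -> lam <= fp c).
  { intros c Hc. destruct (Rlt_dec c dR).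
    - assert (2 < fp c) by (apply HR; [lra| rewrite Rabs_right; lra]). lra.
    - specialize (HlR2 c ltac:(lra)). lra. }
  assert (HfpL : forall c, -1 < c < 0 -> lam <= fp c).
  { intros c Hc. destruct (Rlt_dec (- dL) c).
    - assert (2 < fp c) by (apply HL; [lra| rewrite Rabs_left; lra]). lra.
    - specialize (HlL2 c ltac:(lra)). lra. }
  pose proof (filter_ED _ _ _ _ HlR) as ER. pose proof (filter_ED _ _ _ _ HlL) as EL.
  assert (HCR : forall c, 0 <= c <= 1 -> ED (fun y => 0 <= y <= 1) (GR f) c (GR f c)).
  { intros c Hc. destruct (Req_dec c 0) as [->|Hc0].
    - rewrite GR0. intros eps He. destruct (ER eps He) as [del [Hd H]].
      exists del; split; auto. intros y Hy Hy2. destruct (Req_dec y 0) as [->|Hy0].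
      + rewrite GR0. replace (-1 - -1) with 0 by ring. rewrite Rabs_R0; auto.
      + rewrite GRf by auto. apply H; auto. lra.
    - rewrite GRf by auto. intros eps He.
      destruct (Hcf c ltac:(split; lra) eps He) as [del [Hd H]].
      exists (Rmin del c). split; [apply Rmin_pos; lra|]. intros y Hy Hy2.
      pose proof (Rmin_l del c). pose proof (Rmin_r del c).
      assert (Hy3 := Hy2). apply Rabs_def2 in Hy3.
      rewrite GRf by lra. apply H; [split; lra| lra]. }
  assert (HCL : forall c, -1 <= c <= 0 -> ED (fun y => -1 <= y <= 0) (GL f) c (GL f c)).
  { intros c Hc. destruct (Req_dec c 0) as [->|Hc0].
    - rewrite GL0. intros eps He. destruct (EL eps He) as [del [Hd H]].
      exists del; split; auto. intros y Hy Hy2. destruct (Req_dec y 0) as [->|Hy0].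
      + rewrite GL0. replace (1 - 1) with 0 by ring. rewrite Rabs_R0; auto.
      + rewrite GLf by auto. apply H; auto. lra.
    - rewrite GLf by auto. intros eps He.
      destruct (Hcf c ltac:(split; lra) eps He) as [del [Hd H]].
      exists (Rmin del (- c)). split; [apply Rmin_pos; lra|]. intros y Hy Hy2.
      pose proof (Rmin_l del (- c)). pose proof (Rmin_r del (- c)).
      assert (Hy3 := Hy2). apply Rabs_def2 in Hy3.
      rewrite GLf by lra. apply H; [split; lra| lra]. }
  assert (HDR : forall c, 0 < c < 1 -> derivable_pt_lim (GR f) c (fp c)).
  { intros c Hc. apply (ED_deriv Dom f (GR f) c (fp c) 0 1 Hc).
    - intros y Hy. split; [split; lra| apply GRf; lra].
    - apply Hq. split; lra. }
  assert (HDL : forall c, -1 < c < 0 -> derivable_pt_lim (GL f) c (fp c)).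
  { intros c Hc. apply (ED_deriv Dom f (GL f) c (fp c) (-1) 0 Hc).
    - intros y Hy. split; [split; lra| apply GLf; lra].
    - apply Hq. split; lra. }
  exists lam. split; [lra|]. split; [nra|]. split.
  { intros x Dx. destruct (Hb x Dx); auto. }
  split; [|split; [|split]].
  - intros x y Hx Hxy Hy. apply (branch_mono (GR f) fp 0 1 lam); auto; lra.
  - intros x y z Hx Hxy Hy Hz. apply (branch_ivt (GR f) 0 1); auto; lra.
  - intros x y Hx Hxy Hy. apply (branch_mono (GL f) fp (-1) 0 lam); auto; lra.
  - intros x y z Hx Hxy Hy Hz. apply (branch_ivt (GL f) (-1) 0); auto; lra.
Qed.


Theorem mainTheorem8 (r : nat) (f : R -> R) :
  (1 <= r)%nat -> Lorenz_expanding r f ->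
  forall a b : R, a < b -> (forall x, a < x < b -> Dom x) ->
  exists N : nat, (0 < N)%nat /\
    forall y : R,
      (-1 < y < 1) <->
      (exists i : nat, (i <= N)%nat /\ iter_image f i (fun x => a < x < b) y).
Proof.
  intros Hr HL a b Hab HD.
  destruct (analytic r f Hr HL) as [lam [H0 [H1 [H2 [H3 [H4 [H5 H6]]]]]]].
  apply (dyn_main f lam (fun x => a < x < b)) with (a := a) (b := b); auto. intros x; tauto.
Qed.
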